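(* Let $\sigma\in\{\textsf{Sup},\textsf{KK},\textsf{PSt},\textsf{St},\textsf{WF}\}$, let $\mathcal T$ be a permaconsistent distributed theory, and let $\mathcal B$ be a distributed belief pair (for $\sigma\in\{\textsf{Sup},\textsf{St}\}$, $\mathcal B$ ranges over exact pairs $(\mathcal Q,\mathcal Q)$, identified with the DPWS $\mathcal Q$, and $\tau_{\mathit{beliefpair}}((\mathcal Q,\mathcal Q))$ is identified with the PWS $\tau_{\mathit{pws}}(\mathcal Q)$). Then $\mathcal B$ is a $\sigma$-model of $\mathcal T$ if and only if $\tau_{\mathit{beliefpair}}(\mathcal B)$ is a $\sigma$-model of the AEL theory $\tau_{\mathit{theory}}(\mathcal T)$.
   Context: Standing setup (dAEL). $\Sigma=\Sigma_o\uplus\Sigma_s$ is a first-order vocabulary (objective and subjective symbols). A nonempty domain $D$ and a $\Sigma_o$-structure $I_o$ with domain $D$ are fixed, as is a set of agents $\mathcal{A}\subseteq D$. For each $A\in\mathcal{A}$ there is a constant $A\in\Sigma_o$ with $A^{I_o}=A$, and $\Sigma_o$ contains a unary predicate $\mathrm{Apred}$ with $\mathrm{Apred}^{I_o}=\mathcal{A}$. ''Structure'' means a $\Sigma$-structure with domain $D$ that agrees with $I_o$ on $\Sigma_o$. Formulas of dAEL are built from atoms $P(\bar t)$ ($P\in\Sigma$ or equality) using $\wedge,\neg,\forall x$, and the modal rule: if $\varphi$ is a formula and $t$ a term then $K_t\varphi$ is a formula ($\vee,\Rightarrow,\Leftrightarrow,\exists$ are the usual abbreviations). Truth values are $\mathbf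 t,\mathbf f,\mathbf u$ with truth order $\mathbf f<_t\mathbf u<_t\mathbf t$; $\mathbf t^{-1}=\mathbf f$, $\mathbf f^{-1}=\mathbf t$, $\mathbf u^{-1}=\mathbf u$. A possible world structure (PWS) is a set of structures; $Q_1\le_K Q_2$ iff $Q_2\subseteq Q_1$; $\bot$ denotes the set of all structures and $\top=\emptyset$. A distributed possible world structure (DPWS) is a family $\mathcal Q=(\mathcal Q_A)_{A\in\mathcal A}$ of PWSs, ordered pointwise by $\le_K$. A distributed belief pair (DBP) is a pair $\mathcal B=(\mathcal B^c,\mathcal B^l)$ of DPWSs; $(\mathcal P,\mathcal S)\le_p(\mathcal P',\mathcal S')$ iff $\mathcal P\le_K\mathcal P'$ and $\mathcal S'\le_K\mathcal S$. A DBP is consistent if $\mathcal B^c\le_K\mathcal B^l$ (i.e. $\mathcal B^l_A\subseteq\mathcal B^c_A$ for all $A$); DBPs are tacitly assumed consistent unless said otherwise, and a DPWS $\mathcal Q$ is identified with the exact DBP $(\mathcal Q,\mathcal Q)$. Two-valued value $\varphi^{\mathcal Q,I,a}$ (DPWS $\mathcal Q$, structure $I$, variable assignment $a$): standard first-order clauses for atoms, $\neg,\wedge,\forall$, and $(K_t\varphi)^{\mathcal Q,I,a}=\mathbf t$ iff $t^{I,a}\in\mathcal A$ and $\varphi^{\mathcal Q,J,a}=\mathbf t$ for every $J\in\mathcal Q_{t^{I,a}}$, otherwise $\mathbf f$. Three-valued value $\varphi^{\mathcal B,I,a}$ for any pair $\mathcal B$ of DPWSs: atoms get their two-valued value in $I$;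 $\neg$ is interpreted by ${}^{-1}$, and $\wedge$, $\forall$ by $\le_t$-greatest lower bound (Kleene); $(K_t\varphi)^{\mathcal B,I,a}$ is $\mathbf t$ if $t^{I,a}\in\mathcal A$ and $\varphi^{\mathcal B,J,a}=\mathbf t$ for all $J\in\mathcal B^c_{t^{I,a}}$; it is $\mathbf f$ if $t^{I,a}\notin\mathcal A$ or $\varphi^{\mathcal B,J,a}=\mathbf f$ for some $J\in\mathcal B^l_{t^{I,a}}$; and $\mathbf u$ otherwise. For sentences the assignment is omitted, and the value of a set of sentences is the $\le_t$-glb of the values of its members. A distributed theory is a family $\mathcal T=(\mathcal T_A)_{A\in\mathcal A}$ of sets of dAEL sentences. Operators: $D_{\mathcal T}(\mathcal Q)=(\{I:\mathcal T_A^{\mathcal Q,I}=\mathbf t\})_{A\in\mathcal A}$; $D^*_{\mathcal T}(\mathcal B)=(D^c_{\mathcal T}(\mathcal B),D^l_{\mathcal T}(\mathcal B))$ with $D^c_{\mathcal T}(\mathcal B)_A=\{I:\mathcal T_A^{\mathcal B,I}\ne\mathbf f\}$ and $D^l_{\mathcal T}(\mathcal B)_A=\{I:\mathcal T_A^{\mathcal B,I}=\mathbf t\}$; the stable operator $S_{\mathcal T}(\mathcal Q)$ is the $\le_K$-least fixpoint of $\mathcal Q'\mapsto D^c_{\mathcal T}((\mathcal Q',\mathcal Q))$. Models of $\mathcal T$ (w.r.t. $I_o$): a Sup-model is a DPWS fixpoint of $D_{\mathcal T}$; the KK-model is the $\le_p$-least fixpoint of $D^*_{\mathcal T}$; a PSt-model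 is a DBP $\mathcal B$ with $\mathcal B^c=S_{\mathcal T}(\mathcal B^l)$ and $\mathcal B^l=S_{\mathcal T}(\mathcal B^c)$; an St-model is a DPWS $\mathcal Q$ such that $(\mathcal Q,\mathcal Q)$ is a PSt-model; the WF-model is the $\le_p$-least PSt-model. Permaconsistency: $\mathcal T$ is permaconsistent if for each $A\in\mathcal A$ and each theory $T'$ obtained from $\mathcal T_A$ by replacing each occurrence of a subformula $K_t\varphi$ that is not nested under a modal operator by $\mathbf t$ or by $\mathbf f$ (independently per occurrence), $T'$ has a model that is a structure (i.e. expands $I_o$). Translation to AEL. $\Sigma'$ consists of all symbols of $\Sigma_o$ and all symbols of $\Sigma_s$ with arity increased by one. A fixed element $\delta\in D$ is chosen. A $\Sigma'$-structure always has domain $D$, agrees with $I_o$ on $\Sigma_o$, and is normal: for every $f\in\Sigma_s$, $f^J(\bar d,d)=\delta$ whenever $d\notin\mathcal A$, and for every relation $R\in\Sigma_s$, $(\bar d,d)\notin R^J$ whenever $d\notin\mathcal A$. AEL formulas over $\Sigma'$ are built like dAEL formulas but with a single unindexed modal operator $K$. AEL semantics: a PWS is a set of $\Sigma'$-structures (with $\le_K$ reverse inclusion, $\bot$ the set of all $\Sigma'$-structures, $\top=\emptyset$); a belief pair is a pair $(P,S)$ of PWSs with $S\subseteq P$, with $(P,S)\le_p(P',S')$ iff $P\le_K P'$ and $S'\le_K S$; values $\varphi^{Q,J}$ and $\varphi^{(P,S),J}$ are defined as in dAEL but with $(K\varphi)^{Q,J,a}=\mathbf t$ iff $\varphi^{Q,J',a}=\mathbf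 t$ for all $J'\in Q$, and $(K\varphi)^{(P,S),J,a}$ equal to $\mathbf t$ if $\varphi$ is $\mathbf t$ at all $J'\in P$, $\mathbf f$ if $\varphi$ is $\mathbf f$ at some $J'\in S$, $\mathbf u$ otherwise. For an AEL theory $T$: $D_T(Q)=\{J:T^{Q,J}=\mathbf t\}$, $D^*_T(P,S)=(\{J:T^{(P,S),J}\ne\mathbf f\},\{J:T^{(P,S),J}=\mathbf t\})$, $S_T(Q)$ = $\le_K$-least fixpoint of $Q'\mapsto D^*_T(Q',Q)_1$; Sup-, KK-, PSt-, St-, WF-models are defined from these exactly as in dAEL. For a $\Sigma$-term $t$ and $\Sigma'$-term $s$, $t_s$ is defined by $x_s=x$ for variables, $f(t_1,\dots,t_n)_s=f((t_1)_s,\dots,(t_n)_s,s)$ for $f\in\Sigma_s$, $f(t_1,\dots,t_n)_s=f((t_1)_s,\dots,(t_n)_s)$ for $f\in\Sigma_o$. $\tau_{\mathit{formula}}(s,\cdot)$: $P(t_1,\dots,t_n)\mapsto P((t_1)_s,\dots,(t_n)_s,s)$ if $P\in\Sigma_s$, $P((t_1)_s,\dots,(t_n)_s)$ if $P\in\Sigma_o$ or equality; commutes with $\neg,\wedge,\forall x$; $\tau_{\mathit{formula}}(s,K_t\phi)=\exists x(x=t_s\wedge\mathrm{Apred}(x)\wedge K\,\tau_{\mathit{formula}}(x,\phi))$ for a fresh variable $x$. $\tau_{\mathit{theory}}(\mathcal T)=\bigcup_{A\in\mathcal A}\{\tau_{\mathit{formula}}(A,\phi):\phi\in\mathcal T_A\}$.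 For a family $(I_A)_{A\in\mathcal A}$ of structures, $\tau_{\mathit{structure}}((I_A)_A)$ is the $\Sigma'$-structure interpreting $\Sigma_o$ as $I_o$, each $f\in\Sigma_s$ by $f(\bar d,d)=f^{I_d}(\bar d)$ if $d\in\mathcal A$ and $\delta$ otherwise, and each relation $R\in\Sigma_s$ by $(\bar d,d)\in R$ iff $d\in\mathcal A$ and $\bar d\in R^{I_d}$. $\tau_{\mathit{pws}}(\mathcal Q)=\{\tau_{\mathit{structure}}((I_A)_A): I_A\in\mathcal Q_A\text{ for all }A\in\mathcal A\}$, and $\tau_{\mathit{beliefpair}}(\mathcal B)=(\tau_{\mathit{pws}}(\mathcal B^c),\tau_{\mathit{pws}}(\mathcal B^l))$. *)

(* Defs.v *)
From Stdlib Require Import List Arith Classical ClassicalEpsilon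
  FunctionalExtensionality PropExtensionality ProofIrrelevance.
Import ListNotations.
Set Implicit Arguments.

Record Setup := mkSetup {
  s_F : Type;
  s_R : Type;
  s_arF : s_F -> nat;
  s_arR : s_R -> nat;
  s_subjF : s_F -> bool;             (* true iff the symbol is in Sigma_s *)
  s_subjR : s_R -> bool;
  s_D : Type;
  s_IoF : s_F -> list s_D -> s_D;    (* I_o (only used on objective symbols, at their arity) *)
  s_IoR : s_R -> list s_D -> Prop;
  s_agent : s_D -> Prop;
  s_agentC : s_D -> s_F;
  s_Apred : s_R;
  s_delta : s_D;                     (* the fixed element delta (so D is nonempty) *)
  s_agentC_obj : forall a, s_agent a -> s_subjF (s_agentC a) = false;
  s_agentC_ar : forall a, s_agent a -> s_arF (s_agentC a) = 0;
  s_agentC_int : forall a, s_agent a -> s_IoF (s_agentC a) [] = a;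
  s_Apred_obj : s_subjR s_Apred = false;
  s_Apred_ar : s_arR s_Apred = 1;
  s_Apred_int : forall d, s_IoR s_Apred [d] <-> s_agent d
}.

(* Three truth values with the truth order f < u < t *)
Inductive tv := tT | tF | tU.

Definition tneg (v : tv) : tv :=
  match v with tT => tF | tF => tT | tU => tU end.

Definition tmeet (v w : tv) : tv :=
  match v, w with
  | tF, _ => tF | _, tF => tF | tU, _ => tU | _, tU => tU | tT, tT => tT
  end.

(* <=_t-greatest lower bound of an arbitrary set of values (glb of empty set = t) *)
Definition tglb (P : tv -> Prop) : tv :=
  if excluded_middle_informative (P tF) then tF
  else if excluded_middle_informative (P tU) then tU else tT.

Definition scons {X : Type} (d : X) (a : nat -> X) (n : nat) : X :=
  match n with 0 => d | S k => a k end.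

Section Logic.
Variable Sg : Setup.
Local Notation F := (s_F Sg).
Local Notation R := (s_R Sg).
Local Notation D := (s_D Sg).
Local Notation delta := (s_delta Sg).

Definition Agent := { d : D | s_agent Sg d }.

(* Terms (variables are de Bruijn indices).  The same symbol names are
   used for Sigma and Sigma' (Sigma' only changes arities). *)
Inductive term : Type :=
| Var : nat -> term
| App : F -> list term -> term.

Inductive dform : Type :=
| DAtom : R -> list term -> dform
| DEq : term -> term -> dform
| DNeg : dform -> dform
| DAnd : dform -> dform -> dform
| DAll : dform -> dform
| DK : term -> dform -> dform.

Inductive aform : Type :=
| AAtom : R -> list term -> aform
| AEq : term -> term -> aform
| ANeg : aform -> aform
| AAnd : aform -> aform -> aform
| AAll : aform -> aform
| AK : aform -> aform.

Definition AEx (phi : aform) : aform := ANeg (AAll (ANeg phi)).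

Fixpoint term_ok (k : nat) (t : term) : bool :=
  match t with
  | Var n => Nat.ltb n k
  | App f ts => Nat.eqb (length ts) (s_arF Sg f) && forallb (term_ok k) ts
  end.

Fixpoint dform_ok (k : nat) (phi : dform) : bool :=
  match phi with
  | DAtom r ts => Nat.eqb (length ts) (s_arR Sg r) && forallb (term_ok k) ts
  | DEq t1 t2 => term_ok k t1 && term_ok k t2
  | DNeg p => dform_ok k p
  | DAnd p q => dform_ok k p && dform_ok k q
  | DAll p => dform_ok (S k) p
  | DK t p => term_ok k t && dform_ok k p
  end.

Definition dsentence (phi : dform) : Prop := dform_ok 0 phi = true.

Record raw := mkRaw { rF : F -> list D -> D; rR : R -> list D -> Prop }.

(* Interpretations are given on lists; on lists of the wrong length a
   function symbol yields delta and a relation symbol is false (so a raw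
   structure of this kind is exactly an ordinary structure). *)
Definition is_structure (I : raw) : Prop :=
  (forall f l, length l = s_arF Sg f -> s_subjF Sg f = false -> rF I f l = s_IoF Sg f l) /\
  (forall r l, length l = s_arR Sg r -> s_subjR Sg r = false -> (rR I r l <-> s_IoR Sg r l)) /\
  (forall f l, length l <> s_arF Sg f -> rF I f l = delta) /\
  (forall r l, length l <> s_arR Sg r -> ~ rR I r l).

Definition arF' (f : F) : nat := s_arF Sg f + (if s_subjF Sg f then 1 else 0).
Definition arR' (r : R) : nat := s_arR Sg r + (if s_subjR Sg r then 1 else 0).

Definition is_structure' (J : raw) : Prop :=
  (forall f l, length l = arF' f -> s_subjF Sg f = false -> rF J f l = s_IoF Sg f l) /\
  (forall r l, length l = arR' r -> s_subjR Sg r = false -> (rR J r l <-> s_IoR Sg r l)) /\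
  (forall f l, length l <> arF' f -> rF J f l = delta) /\
  (forall r l, length l <> arR' r -> ~ rR J r l) /\
  (forall f ds d, s_subjF Sg f = true -> ~ s_agent Sg d -> rF J f (ds ++ [d]) = delta) /\
  (forall r ds d, s_subjR Sg r = true -> ~ s_agent Sg d -> ~ rR J r (ds ++ [d])).

Definition structure := { I : raw | is_structure I }.
Definition structure' := { J : raw | is_structure' J }.

Definition PWS := structure -> Prop.
Definition DPWS := Agent -> PWS.
Definition DBP := (DPWS * DPWS)%type.
Definition PWS' := structure' -> Prop.
Definition BP' := (PWS' * PWS')%type.

Definition leK {X : Type} (Q1 Q2 : X -> Prop) : Prop := forall x, Q2 x -> Q1 x.
Definition leKD (Q1 Q2 : DPWS) : Prop := forall A, leK (Q1 A) (Q2 A).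

Fixpoint evalT (I : raw) (a : nat -> D) (t : term) : D :=
  match t with
  | Var n => a n
  | App f ts => rF I f (map (evalT I a) ts)
  end.

Definition of_prop (p : Prop) : tv :=
  if excluded_middle_informative p then tT else tF.

Fixpoint dsat (Q : DPWS) (I : structure) (a : nat -> D) (phi : dform) : Prop :=
  match phi with
  | DAtom r ts => rR (proj1_sig I) r (map (evalT (proj1_sig I) a) ts)
  | DEq t1 t2 => evalT (proj1_sig I) a t1 = evalT (proj1_sig I) a t2
  | DNeg p => ~ dsat Q I a p
  | DAnd p q => dsat Q I a p /\ dsat Q I a q
  | DAll p => forall d : D, dsat Q I (scons d a) p
  | DK t p =>
      exists H : s_agent Sg (evalT (proj1_sig I) a t),
        forall J, Q (exist _ _ H) J -> dsat Q J a p
  end.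

Fixpoint dval (B : DBP) (I : structure) (a : nat -> D) (phi : dform) : tv :=
  match phi with
  | DAtom r ts => of_prop (rR (proj1_sig I) r (map (evalT (proj1_sig I) a) ts))
  | DEq t1 t2 => of_prop (evalT (proj1_sig I) a t1 = evalT (proj1_sig I) a t2)
  | DNeg p => tneg (dval B I a p)
  | DAnd p q => tmeet (dval B I a p) (dval B I a q)
  | DAll p => tglb (fun v => exists d : D, v = dval B I (scons d a) p)
  | DK t p =>
      match excluded_middle_informative (s_agent Sg (evalT (proj1_sig I) a t)) with
      | right _ => tF
      | left H =>
          if excluded_middle_informative
               (forall J, fst B (exist _ _ H) J -> dval B J a p = tT) then tT
          else if excluded_middle_informative
               (exists J, snd B (exist _ _ H) J /\ dval B J a p = tF) then tF
          else tU
      end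
  end.

(* sentences: the assignment is irrelevant; we use the constant one *)
Definition a0 : nat -> D := fun _ => delta.

Definition dtheory := Agent -> dform -> Prop.

Definition dtheory_wf (T : dtheory) : Prop :=
  forall A phi, T A phi -> dsentence phi.

Definition dset_sat (T : dform -> Prop) (Q : DPWS) (I : structure) : Prop :=
  forall phi, T phi -> dsat Q I a0 phi.

Definition dset_val (T : dform -> Prop) (B : DBP) (I : structure) : tv :=
  tglb (fun v => exists phi, T phi /\ v = dval B I a0 phi).

Definition DopD (T : dtheory) (Q : DPWS) : DPWS :=
  fun A I => dset_sat (T A) Q I.
Definition DcD (T : dtheory) (B : DBP) : DPWS :=
  fun A I => dset_val (T A) B I <> tF.
Definition DlD (T : dtheory) (B : DBP) : DPWS :=
  fun A I => dset_val (T A) B I = tT.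
Definition DstarD (T : dtheory) (B : DBP) : DBP := (DcD T B, DlD T B).

Fixpoint asat (Q : PWS') (J : structure') (a : nat -> D) (phi : aform) : Prop :=
  match phi with
  | AAtom r ts => rR (proj1_sig J) r (map (evalT (proj1_sig J) a) ts)
  | AEq t1 t2 => evalT (proj1_sig J) a t1 = evalT (proj1_sig J) a t2
  | ANeg p => ~ asat Q J a p
  | AAnd p q => asat Q J a p /\ asat Q J a q
  | AAll p => forall d : D, asat Q J (scons d a) p
  | AK p => forall J', Q J' -> asat Q J' a p
  end.

Fixpoint aval (B : BP') (J : structure') (a : nat -> D) (phi : aform) : tv :=
  match phi with
  | AAtom r ts => of_prop (rR (proj1_sig J) r (map (evalT (proj1_sig J) a) ts))
  | AEq t1 t2 => of_prop (evalT (proj1_sig J) a t1 = evalT (proj1_sig J) a t2)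
  | ANeg p => tneg (aval B J a p)
  | AAnd p q => tmeet (aval B J a p) (aval B J a q)
  | AAll p => tglb (fun v => exists d : D, v = aval B J (scons d a) p)
  | AK p =>
      if excluded_middle_informative (forall J', fst B J' -> aval B J' a p = tT) then tT
      else if excluded_middle_informative (exists J', snd B J' /\ aval B J' a p = tF) then tF
      else tU
  end.

Definition atheory := aform -> Prop.

Definition aset_sat (T : atheory) (Q : PWS') (J : structure') : Prop :=
  forall phi, T phi -> asat Q J a0 phi.
Definition aset_val (T : atheory) (B : BP') (J : structure') : tv :=
  tglb (fun v => exists phi, T phi /\ v = aval B J a0 phi).

Definition DopA (T : atheory) (Q : PWS') : PWS' := fun J => aset_sat T Q J.
Definition DstarA (T : atheory) (B : BP') : BP' :=
  (fun J => aset_val T B J <> tF, fun J => aset_val T B J = tT).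

(* objective formulas with truth constants: the result of replacing
   top-level modal subformulas by t or f *)
Inductive pform : Type :=
| PAtom : R -> list term -> pform
| PEq : term -> term -> pform
| PNeg : pform -> pform
| PAnd : pform -> pform -> pform
| PAll : pform -> pform
| PConst : bool -> pform.

Fixpoint psat (I : structure) (a : nat -> D) (phi : pform) : Prop :=
  match phi with
  | PAtom r ts => rR (proj1_sig I) r (map (evalT (proj1_sig I) a) ts)
  | PEq t1 t2 => evalT (proj1_sig I) a t1 = evalT (proj1_sig I) a t2
  | PNeg p => ~ psat I a p
  | PAnd p q => psat I a p /\ psat I a q
  | PAll p => forall d : D, psat I (scons d a) p
  | PConst b => b = true
  end.

Inductive repl : dform -> pform -> Prop :=
| repl_atom : forall r ts, repl (DAtom r ts) (PAtom r ts)
| repl_eq : forall t1 t2, repl (DEq t1 t2) (PEq t1 t2)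
| repl_neg : forall p p', repl p p' -> repl (DNeg p) (PNeg p')
| repl_and : forall p p' q q', repl p p' -> repl q q' -> repl (DAnd p q) (PAnd p' q')
| repl_all : forall p p', repl p p' -> repl (DAll p) (PAll p')
| repl_K : forall t p (b : bool), repl (DK t p) (PConst b).

Definition permaconsistent (T : dtheory) : Prop :=
  forall (A : Agent) (choice : dform -> pform),
    (forall phi, T A phi -> repl phi (choice phi)) ->
    exists I : structure, forall phi, T A phi -> psat I a0 (choice phi).

Fixpoint shiftT (c : nat) (t : term) : term :=
  match t with
  | Var n => Var (if Nat.ltb n c then n else S n)
  | App f ts => App f (map (shiftT c) ts)
  end.

Definition upren (rho : nat -> nat) (n : nat) : nat :=
  match n with 0 => 0 | S k => S (rho k) end.

(* t_s, where additionally the variables of t are renamed by rho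
   (rho is used to realise the de Bruijn shifts caused by new binders;
   the actual t_s is tr_term id s t) *)
Fixpoint tr_term (rho : nat -> nat) (s : term) (t : term) : term :=
  match t with
  | Var n => Var (rho n)
  | App f ts => App f (map (tr_term rho s) ts ++ (if s_subjF Sg f then [s] else []))
  end.

(* In the K-clause, the fresh variable x is the de Bruijn variable bound by the
   new existential quantifier; the free variables of t_s and of phi are shifted
   past it. *)
Fixpoint tr_form (rho : nat -> nat) (s : term) (phi : dform) : aform :=
  match phi with
  | DAtom r ts => AAtom r (map (tr_term rho s) ts ++ (if s_subjR Sg r then [s] else []))
  | DEq t1 t2 => AEq (tr_term rho s t1) (tr_term rho s t2)
  | DNeg p => ANeg (tr_form rho s p)
  | DAnd p q => AAnd (tr_form rho s p) (tr_form rho s q)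
  | DAll p => AAll (tr_form (upren rho) (shiftT 0 s) p)
  | DK t p =>
      AEx (AAnd (AEq (Var 0) (shiftT 0 (tr_term rho s t)))
                (AAnd (AAtom (s_Apred Sg) [Var 0])
                      (AK (tr_form (fun n => S (rho n)) (Var 0) p))))
  end.

Definition tau_formula (s : term) (phi : dform) : aform := tr_form (fun n => n) s phi.

Definition agent_term (A : Agent) : term := App (s_agentC Sg (proj1_sig A)) [].

Definition tau_theory (T : dtheory) : atheory :=
  fun psi => exists (A : Agent) phi, T A phi /\ psi = tau_formula (agent_term A) phi.

Definition tau_raw (fam : Agent -> structure) : raw :=
  mkRaw
    (fun f l =>
       if s_subjF Sg f then
         if Nat.eqb (length l) (s_arF Sg f + 1) then
           match excluded_middle_informative (s_agent Sg (last l delta)) with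
           | left H => rF (proj1_sig (fam (exist _ _ H))) f (removelast l)
           | right _ => delta
           end
         else delta
       else if Nat.eqb (length l) (s_arF Sg f) then s_IoF Sg f l else delta)
    (fun r l =>
       if s_subjR Sg r then
         length l = s_arR Sg r + 1 /\
         exists H : s_agent Sg (last l delta),
           rR (proj1_sig (fam (exist _ _ H))) r (removelast l)
       else length l = s_arR Sg r /\ s_IoR Sg r l).

Definition tau_pws (Q : DPWS) : PWS' :=
  fun J => exists fam : Agent -> structure,
      (forall A, Q A (fam A)) /\ proj1_sig J = tau_raw fam.

Definition tau_bp (B : DBP) : BP' := (tau_pws (fst B), tau_pws (snd B)).

End Logic.

Section Models.
Variable L : Type.
Variable le : L -> L -> Prop.

Definition lep (B1 B2 : L * L) : Prop := le (fst B1) (fst B2) /\ le (snd B2) (snd B1).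
Definition consistentP (B : L * L) : Prop := le (fst B) (snd B).

Definition is_stable (Dc : L * L -> L) (Q x : L) : Prop :=
  Dc (x, Q) = x /\ forall y, Dc (y, Q) = y -> le x y.

Definition is_sup_model (Dop : L -> L) (Q : L) : Prop := Dop Q = Q.

Definition is_kk_model (Dstar : L * L -> L * L) (B : L * L) : Prop :=
  consistentP B /\ Dstar B = B /\
  forall B', consistentP B' -> Dstar B' = B' -> lep B B'.

Definition is_pst_model (Dc : L * L -> L) (B : L * L) : Prop :=
  consistentP B /\ is_stable Dc (snd B) (fst B) /\ is_stable Dc (fst B) (snd B).

Definition is_st_model (Dc : L * L -> L) (Q : L) : Prop := is_pst_model Dc (Q, Q).

Definition is_wf_model (Dc : L * L -> L) (B : L * L) : Prop :=
  is_pst_model Dc B /\ forall B', is_pst_model Dc B' -> lep B B'.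
End Models.

Definition dSup (Sg : Setup) (T : dtheory Sg) (Q : DPWS Sg) :=
  is_sup_model (DopD T) Q.
Definition dKK (Sg : Setup) (T : dtheory Sg) (B : DBP Sg) :=
  is_kk_model (@leKD Sg) (DstarD T) B.
Definition dPSt (Sg : Setup) (T : dtheory Sg) (B : DBP Sg) :=
  is_pst_model (@leKD Sg) (DcD T) B.
Definition dSt (Sg : Setup) (T : dtheory Sg) (Q : DPWS Sg) :=
  is_st_model (@leKD Sg) (DcD T) Q.
Definition dWF (Sg : Setup) (T : dtheory Sg) (B : DBP Sg) :=
  is_wf_model (@leKD Sg) (DcD T) B.

Definition aSup (Sg : Setup) (T : atheory Sg) (Q : PWS' Sg) :=
  is_sup_model (DopA T) Q.
Definition aKK (Sg : Setup) (T : atheory Sg) (B : BP' Sg) :=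
  is_kk_model (@leK _) (DstarA T) B.
Definition aPSt (Sg : Setup) (T : atheory Sg) (B : BP' Sg) :=
  is_pst_model (@leK _) (fun B => fst (DstarA T B)) B.
Definition aSt (Sg : Setup) (T : atheory Sg) (Q : PWS' Sg) :=
  is_st_model (@leK _) (fun B => fst (DstarA T B)) Q.
Definition aWF (Sg : Setup) (T : atheory Sg) (B : BP' Sg) :=
  is_wf_model (@leK _) (fun B => fst (DstarA T B)) B.

Definition dconsistent (Sg : Setup) (B : DBP Sg) : Prop := consistentP (@leKD Sg) B.

(* Main.v *)
Require Import Defs.
From Stdlib Require Import List Arith Lia Classical ClassicalEpsilon
  FunctionalExtensionality PropExtensionality ProofIrrelevance.
Import ListNotations.
Set Implicit Arguments.

Lemma sig_eq {X : Type} {P : X -> Prop} (x y : {z | P z}) :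
  proj1_sig x = proj1_sig y -> x = y.
Proof. destruct x, y; simpl; intros; subst; f_equal; apply proof_irrelevance. Qed.

Lemma tglb_T (P : tv -> Prop) : tglb P = tT <-> (forall v, P v -> v = tT).
Proof.
  unfold tglb; destruct (excluded_middle_informative (P tF)) as [h|h];
  [|destruct (excluded_middle_informative (P tU)) as [h2|h2]]; split; intros H.
  - discriminate. - apply H in h; discriminate.
  - discriminate. - apply H in h2; discriminate.
  - intros v Hv; destruct v; tauto. - reflexivity.
Qed.

Lemma tglb_F (P : tv -> Prop) : tglb P = tF <-> P tF.
Proof.
  unfold tglb; destruct (excluded_middle_informative (P tF)) as [h|h];
  [|destruct (excluded_middle_informative (P tU)) as [h2|h2]]; split; intros H;
  try discriminate; tauto.
Qed.

Lemma tglb_ext (P Q : tv -> Prop) : (forall v, P v <-> Q v) -> tglb P = tglb Q.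
Proof.
  intros H; assert (P = Q) by (extensionality v; apply propositional_extensionality; auto).
  subst; reflexivity.
Qed.

Lemma tglb_one (P : tv -> Prop) w : P w -> (forall v, P v -> v = w \/ v = tT) -> tglb P = w.
Proof.
  intros Hw Hv. destruct w.
  - apply tglb_T. intros v H; destruct (Hv v H); auto.
  - apply tglb_F; auto.
  - unfold tglb. destruct (excluded_middle_informative (P tF)) as [h|h].
    + destruct (Hv _ h); discriminate.
    + destruct (excluded_middle_informative (P tU)); tauto.
Qed.

Lemma of_prop_T (p : Prop) : of_prop p = tT <-> p.
Proof. unfold of_prop; destruct (excluded_middle_informative p); split; intros; try discriminate; tauto. Qed.
Lemma of_prop_F (p : Prop) : of_prop p = tF <-> ~ p.
Proof. unfold of_prop; destruct (excluded_middle_informative p); split; intros; try discriminate; tauto. Qed.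
Lemma of_prop_iff (p q : Prop) : (p <-> q) -> of_prop p = of_prop q.
Proof. intros H; apply propositional_extensionality in H; subst; auto. Qed.

Section TI.
Variable Sg : Setup.
Variable P : term Sg -> Prop.
Hypothesis HV : forall n, P (Var Sg n).
Hypothesis HA : forall f ts, Forall P ts -> P (App f ts).
Fixpoint term_ind2 (t : term Sg) : P t :=
  match t with
  | @Var _ n => HV n
  | App f ts => HA f ((fix go (l : list (term Sg)) : Forall P l :=
                        match l with [] => Forall_nil _ | x :: l' => Forall_cons _ (term_ind2 x) (go l') end) ts)
  end.
End TI.

Section S.
Variable Sg : Setup.
Local Notation D := (s_D Sg).
Local Notation delta := (s_delta Sg).

Lemma agent_eq (A B : Agent Sg) : proj1_sig A = proj1_sig B -> A = B.
Proof. apply sig_eq. Qed.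

Definition slice_raw (J : raw Sg) (A : Agent Sg) : raw Sg :=
  @mkRaw Sg (fun f l => if s_subjF Sg f then
                      (if Nat.eqb (length l) (s_arF Sg f) then rF J f (l ++ [proj1_sig A]) else delta)
                    else rF J f l)
        (fun r l => if s_subjR Sg r then length l = s_arR Sg r /\ rR J r (l ++ [proj1_sig A])
                    else rR J r l).

Lemma slice_ok (J : structure' Sg) A : is_structure (slice_raw (proj1_sig J) A).
Proof.
  destruct J as [J [H1 [H2 [H3 [H4 [H5 H6]]]]]]; unfold arF', arR' in *; simpl.
  unfold is_structure, slice_raw; simpl.
  split; [|split; [|split]].
  - intros f l Hl Hs; rewrite Hs; apply H1; auto; rewrite Hs; lia.
  - intros r l Hl Hs; rewrite Hs; apply H2; auto; rewrite Hs; lia.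
  - intros f l Hl. destruct (s_subjF Sg f) eqn:E.
    + destruct (Nat.eqb_spec (length l) (s_arF Sg f)); tauto.
    + apply H3; rewrite E; lia.
  - intros r l Hl. destruct (s_subjR Sg r) eqn:E.
    + tauto.
    + apply H4; rewrite E; lia.
Qed.

Definition slice (J : structure' Sg) (A : Agent Sg) : structure Sg :=
  exist _ (slice_raw (proj1_sig J) A) (slice_ok J A).

Lemma tau_ok (fam : Agent Sg -> structure Sg) : is_structure' (tau_raw fam).
Proof.
  unfold is_structure', arF', arR'; simpl. repeat split.
  - intros f l Hl Hs; rewrite Hs in *; rewrite Nat.add_0_r in Hl;
    rewrite Hl, Nat.eqb_refl; auto.
  - intros Hr; rewrite H0 in *; rewrite Nat.add_0_r in H; tauto.
  - intros Hr; rewrite H0 in *; rewrite Nat.add_0_r in H; tauto.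
  - intros f l Hl. destruct (s_subjF Sg f).
    + destruct (Nat.eqb_spec (length l) (s_arF Sg f + 1)); [lia|auto].
    + destruct (Nat.eqb_spec (length l) (s_arF Sg f)); [lia|auto].
  - intros r l Hl Hr. destruct (s_subjR Sg r); destruct Hr; lia.
  - intros f ds d Hs Ha. rewrite Hs. destruct (Nat.eqb _ _); auto.
    destruct (excluded_middle_informative _) as [h|h]; auto.
    exfalso; rewrite last_last in h; auto.
  - intros r ds d Hs Ha Hr. rewrite Hs in Hr. destruct Hr as [_ [h _]].
    rewrite last_last in h; auto.
Qed.

Definition tau_s (fam : Agent Sg -> structure Sg) : structure' Sg := exist _ _ (tau_ok fam).

Lemma slice_proj (J J' : structure' Sg) A : proj1_sig J = proj1_sig J' -> slice J A = slice J' A.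
Proof. intros H; apply sig_eq; simpl; rewrite H; auto. Qed.

Lemma slice_tau fam A : slice (tau_s fam) A = fam A.
Proof.
  apply sig_eq; simpl. unfold slice_raw; simpl.
  destruct (fam A) as [I [H1 [H2 [H3 H4]]]] eqn:EA; simpl.
  destruct I as [IF IR]; simpl in *. f_equal.
  - extensionality f; extensionality l.
    destruct (s_subjF Sg f) eqn:E.
    + destruct (Nat.eqb_spec (length l) (s_arF Sg f)) as [e|e].
      * rewrite length_app; simpl. rewrite e, Nat.eqb_refl.
        destruct (excluded_middle_informative _) as [h|h].
        -- assert (exist _ _ h = A) as ->. { apply agent_eq; simpl; apply last_last. }
           rewrite EA, removelast_last; auto.
        -- exfalso; apply h; rewrite last_last; apply (proj2_sig A).
      * symmetry; apply H3; auto.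
    + destruct (Nat.eqb_spec (length l) (s_arF Sg f)) as [e|e].
      * symmetry; apply H1; auto.
      * symmetry; apply H3; auto.
  - extensionality r; extensionality l. apply propositional_extensionality.
    destruct (s_subjR Sg r) eqn:E.
    + split.
      * intros [e [_ [h Hr]]].
        assert (exist _ _ h = A) as Ee. { apply agent_eq; simpl; apply last_last. }
        rewrite Ee, EA, removelast_last in Hr; auto.
      * intros Hr. assert (e : length l = s_arR Sg r).
        { destruct (Nat.eq_dec (length l) (s_arR Sg r)); auto. exfalso; eapply H4; eauto. }
        split; auto. rewrite length_app; simpl; split; [lia|].
        assert (h : s_agent Sg (last (l ++ [proj1_sig A]) delta)) by (rewrite last_last; apply (proj2_sig A)).
        exists h. assert (exist _ _ h = A) as Ee. { apply agent_eq; simpl; apply last_last. }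
        rewrite Ee, EA, removelast_last; auto.
    + split.
      * intros [e h]; apply H2; auto.
      * intros Hr. assert (e : length l = s_arR Sg r).
        { destruct (Nat.eq_dec (length l) (s_arR Sg r)); auto. exfalso; eapply H4; eauto. }
        split; auto; apply H2; auto.
Qed.

Lemma tau_slice (J : structure' Sg) : proj1_sig J = tau_raw (slice J).
Proof.
  destruct J as [[JF JR] [H1 [H2 [H3 [H4 [H5 H6]]]]]]; unfold arF', arR' in *; simpl in *.
  unfold tau_raw; simpl. f_equal.
  - extensionality f; extensionality l.
    destruct (s_subjF Sg f) eqn:E.
    + destruct (Nat.eqb_spec (length l) (s_arF Sg f + 1)) as [e|e].
      * assert (ne : l <> []) by (intro; subst; simpl in e; lia).
        pose proof (app_removelast_last delta ne) as El.
        assert (er : length (removelast l) = s_arF Sg f).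
        { rewrite El in e; rewrite length_app in e; simpl in e; lia. }
        destruct (excluded_middle_informative _) as [h|h]; simpl.
        -- rewrite er, Nat.eqb_refl; rewrite <- El; auto.
        -- rewrite El; apply H5; auto.
      * apply H3; rewrite E; auto.
    + destruct (Nat.eqb_spec (length l) (s_arF Sg f)) as [e|e].
      * apply H1; auto; rewrite E; lia.
      * apply H3; rewrite E; lia.
  - extensionality r; extensionality l. apply propositional_extensionality.
    destruct (s_subjR Sg r) eqn:E.
    + split.
      * intros Hr. assert (e : length l = s_arR Sg r + 1).
        { destruct (Nat.eq_dec (length l) (s_arR Sg r + 1)); auto. exfalso; eapply H4; eauto; rewrite E; auto. }
        assert (ne : l <> []) by (intro; subst; simpl in e; lia).
        pose proof (app_removelast_last delta ne) as El.
        split; auto.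
        assert (h : s_agent Sg (last l delta)).
        { destruct (classic (s_agent Sg (last l delta))) as [h|h]; auto.
          exfalso; eapply H6; eauto; rewrite <- El; eauto. }
        exists h; simpl. split.
        { rewrite El in e; rewrite length_app in e; simpl in e; lia. }
        rewrite <- El; auto.
      * intros [e [h [_ Hr]]]. simpl in Hr.
        assert (ne : l <> []) by (intro; subst; simpl in e; lia).
        rewrite (app_removelast_last delta ne); auto.
    + split.
      * intros Hr. assert (e : length l = s_arR Sg r).
        { destruct (Nat.eq_dec (length l) (s_arR Sg r)); auto. exfalso; eapply H4; eauto; rewrite E; lia. }
        split; auto; apply H2; auto; rewrite E; lia.
      * intros [e Hr]; apply H2; auto; rewrite E; lia.
Qed.

Lemma tau_char (Q : DPWS Sg) J : tau_pws Q J <-> forall A, Q A (slice J A).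
Proof.
  split.
  - intros [fam [HQ E]] A. rewrite (@slice_proj J (tau_s fam) A E).
    rewrite slice_tau; auto.
  - intros H. exists (slice J); split; auto. apply tau_slice.
Qed.

End S.
Section M.
Variable Sg : Setup.
Local Notation D := (s_D Sg).
Local Notation delta := (s_delta Sg).

Definition pi (P : PWS' Sg) : DPWS Sg := fun A I => exists J, P J /\ slice J A = I.

Lemma shift_eval (I : raw Sg) a e t : evalT I (scons e a) (shiftT 0 t) = evalT I a t.
Proof.
  induction t using term_ind2; simpl; auto.
  f_equal. rewrite map_map. apply map_ext_Forall. eapply Forall_impl; [|exact H]. simpl; auto.
Qed.

Lemma tr_term_eval (J : structure' Sg) a rho s (d : Agent Sg) t :
  evalT (proj1_sig J) a s = proj1_sig d ->
  evalT (proj1_sig J) a (tr_term rho s t) = evalT (proj1_sig (slice J d)) (fun n => a (rho n)) t.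
Proof.
  intros Hs. induction t using term_ind2; simpl; auto.
  rewrite map_app, map_map.
  assert (E : map (fun x => evalT (proj1_sig J) a (tr_term rho s x)) ts =
              map (evalT (slice_raw (proj1_sig J) d) (fun n => a (rho n))) ts).
  { apply map_ext_Forall. eapply Forall_impl; [|exact H]. simpl; auto. }
  rewrite E. 
  generalize (map (evalT (slice_raw (proj1_sig J) d) (fun n => a (rho n))) ts); intros l.
  unfold slice_raw; simpl.
  destruct J as [J [H1 [H2 [H3 [H4 [H5 H6]]]]]]; unfold arF', arR' in *; simpl in *.
  destruct (s_subjF Sg f) eqn:Ef; simpl.
  - rewrite Hs. destruct (Nat.eqb_spec (length l) (s_arF Sg f)); auto.
    apply H3. rewrite Ef, length_app; simpl; lia.
  - rewrite app_nil_r; auto.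
Qed.

Lemma dval_ext_B (B : DBP Sg) I a a' phi : (forall n, a n = a' n) -> dval B I a phi = dval B I a' phi.
Proof. intros H; assert (a = a') by (extensionality n; auto); subst; auto. Qed.

Lemma tmeet_T_l x : tmeet tT x = x.
Proof. destruct x; reflexivity. Qed.

Lemma emi_if_iff {X : Type} (A B : Prop) (x y : X) : (A <-> B) ->
  (if excluded_middle_informative A then x else y) = (if excluded_middle_informative B then x else y).
Proof.
  intros H; destruct (excluded_middle_informative A), (excluded_middle_informative B); tauto.
Qed.

Lemma main_tr (P0 S0 : PWS' Sg) phi : forall rho s (J : structure' Sg) a (d : Agent Sg),
  evalT (proj1_sig J) a s = proj1_sig d ->
  aval (P0, S0) J a (tr_form rho s phi) = dval (pi P0, pi S0) (slice J d) (fun n => a (rho n)) phi.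
Proof.
  induction phi as [r ts|t1 t2|phi IHphi|phi1 IHphi1 phi2 IHphi2|phi IHphi|t phi IHphi];
    intros rho s J a d Hs; simpl.
  -
    apply of_prop_iff. rewrite map_app, map_map.
    assert (E : map (fun x => evalT (proj1_sig J) a (tr_term rho s x)) ts =
              map (evalT (slice_raw (proj1_sig J) d) (fun n => a (rho n))) ts).
    { apply map_ext; intros x; apply (@tr_term_eval J a rho s d x Hs). }
    rewrite E.
    generalize (map (evalT (slice_raw (proj1_sig J) d) (fun n => a (rho n))) ts); intros l.
    unfold slice_raw; simpl.
    destruct J as [J [H1 [H2 [H3 [H4 [H5 H6]]]]]]; unfold arF', arR' in *; simpl in *.
    destruct (s_subjR Sg r) eqn:Er; simpl.
    + rewrite Hs. split; [|tauto]. intros Hr; split; auto.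
      destruct (Nat.eq_dec (length l) (s_arR Sg r)); auto.
      exfalso; eapply H4; [|exact Hr]. rewrite Er, length_app; simpl; lia.
    + rewrite app_nil_r; tauto.
  - apply of_prop_iff. rewrite !(@tr_term_eval J a rho s d _ Hs). tauto.
  - rewrite (IHphi rho s J a d Hs); auto.
  - rewrite (IHphi1 rho s J a d Hs), (IHphi2 rho s J a d Hs); auto.
  - apply tglb_ext. intros v; split; intros [e Ev]; exists e; rewrite Ev.
    + rewrite (IHphi (upren rho) (shiftT 0 s) J (scons e a) d); [|rewrite shift_eval; auto].
      apply dval_ext_B; intros [|n]; reflexivity.
    + rewrite (IHphi (upren rho) (shiftT 0 s) J (scons e a) d); [|rewrite shift_eval; auto].
      apply dval_ext_B; intros [|n]; reflexivity.
  -
    match goal with |- _ = ?R => set (rhs := R) end.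
    set (psi := tr_form (fun n => S (rho n)) (Var Sg 0) phi).
    set (X := AAnd (AEq (Var Sg 0) (shiftT 0 (tr_term rho s t)))
                   (AAnd (AAtom (s_Apred Sg) [Var Sg 0]) (AK psi))).
    set (te := evalT (slice_raw (proj1_sig J) d) (fun n => a (rho n)) t).
    assert (HV : forall e, aval (P0, S0) J (scons e a) X = if excluded_middle_informative (e = te) then rhs else tF).
    { intros e. unfold X. cbn [aval]. rewrite shift_eval, (tr_term_eval J a rho s d t Hs).
      change (evalT (proj1_sig (slice J d)) (fun n => a (rho n)) t) with te. cbn [evalT map scons fst snd]. destruct (excluded_middle_informative (e = te)) as [Ee|Ee].
      2:{ rewrite (proj2 (of_prop_F _) Ee); reflexivity. }
      rewrite Ee. rewrite (proj2 (of_prop_T _) eq_refl).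
      assert (HA : rR (proj1_sig J) (s_Apred Sg) [te] <-> s_agent Sg te).
      { destruct (proj2_sig J) as [H1 [H2 _]].
        rewrite H2; [apply s_Apred_int| |apply s_Apred_obj].
        unfold arR'; rewrite s_Apred_obj, s_Apred_ar; reflexivity. }
      unfold rhs; fold te.
      destruct (excluded_middle_informative (s_agent Sg te)) as [H|H].
      - rewrite (proj2 (of_prop_T _) (proj2 HA H)).
        set (d' := exist (fun x => s_agent Sg x) te H).
        assert (IH' : forall J', aval (P0, S0) J' (scons te a) psi =
                                 dval (pi P0, pi S0) (slice J' d') (fun n => a (rho n)) phi).
        { intros J'. apply (IHphi (fun n => S (rho n)) (Var Sg 0) J' (scons te a) d'). reflexivity. }
        rewrite !tmeet_T_l.
        assert (C1 : (forall J', P0 J' -> aval (P0, S0) J' (scons te a) psi = tT) <->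
                     (forall I, fst (pi P0, pi S0) d' I -> dval (pi P0, pi S0) I (fun n => a (rho n)) phi = tT)).
        { simpl; split.
          - intros Hp I [J' [HJ' <-]]. rewrite <- IH'; auto.
          - intros Hp J' HJ'. rewrite IH'; apply Hp; exists J'; auto. }
        assert (C2 : (exists J', S0 J' /\ aval (P0, S0) J' (scons te a) psi = tF) <->
                     (exists I, snd (pi P0, pi S0) d' I /\ dval (pi P0, pi S0) I (fun n => a (rho n)) phi = tF)).
        { simpl; split.
          - intros [J' [HJ' Hv]]. exists (slice J' d'); split; [exists J'; auto|]. rewrite <- IH'; auto.
          - intros [I [[J' [HJ' <-]] Hv]]. exists J'; split; auto. rewrite IH'; auto. }
        rewrite (emi_if_iff tF tU C2), (emi_if_iff tT _ C1). reflexivity.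
      - assert (Hn : ~ rR (proj1_sig J) (s_Apred Sg) [te]) by tauto.
        rewrite (proj2 (of_prop_F _) Hn). reflexivity. }
    change (tneg (tglb (fun v => exists e, v = tneg (aval (P0,S0) J (scons e a) X))) = rhs).
    transitivity (tneg (tneg rhs)); [|destruct rhs; reflexivity].
    f_equal. apply tglb_one.
    + exists te. rewrite HV. destruct (excluded_middle_informative (te = te)); tauto.
    + intros v [e ->]. rewrite HV. destruct (excluded_middle_informative (e = te)); auto.
Qed.
End M.
Section W.
Variable Sg : Setup.
Local Notation D := (s_D Sg).

Fixpoint worst (phi : dform Sg) (pol : bool) : pform Sg :=
  match phi with
  | DAtom r ts => PAtom r ts
  | DEq t1 t2 => PEq t1 t2
  | DNeg p => PNeg (worst p (negb pol))
  | DAnd p q => PAnd (worst p pol) (worst q pol)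
  | DAll p => PAll (worst p pol)
  | DK t p => PConst Sg (negb pol)
  end.

Lemma worst_repl phi : forall pol, repl phi (worst phi pol).
Proof. induction phi; intros pol; simpl; constructor; auto. Qed.

Lemma worst_ok (B : DBP Sg) I phi : forall a,
  (psat I a (worst phi true) -> dval B I a phi = tT) /\
  (~ psat I a (worst phi false) -> dval B I a phi = tF).
Proof.
  induction phi as [r ts|t1 t2|phi IHphi|phi1 IHphi1 phi2 IHphi2|phi IHphi|t phi IHphi];
    intros a; simpl.
  - split; intros H; [apply of_prop_T|apply of_prop_F]; auto.
  - split; intros H; [apply of_prop_T|apply of_prop_F]; auto.
  - destruct (IHphi a) as [H1 H2]. split; intros H.
    + rewrite H2; auto.
    + rewrite H1; auto. apply NNPP; auto.
  - destruct (IHphi1 a) as [H1 H2], (IHphi2 a) as [H3 H4]. split; intros H.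
    + rewrite H1, H3; tauto.
    + destruct (classic (psat I a (worst phi1 false))).
      * rewrite H4; [destruct (dval B I a phi1); reflexivity|tauto].
      * rewrite H2; auto.
  - split; intros H.
    + apply tglb_T. intros v [d ->]. apply (IHphi (scons d a)); auto.
    + apply tglb_F. apply not_all_ex_not in H. destruct H as [d Hd].
      exists d. symmetry; apply (IHphi (scons d a)); auto.
  - split; intros H; [discriminate|exfalso; auto].
Qed.

Definition NE (Q : DPWS Sg) : Prop := forall A, exists I, Q A I.

Lemma NE_Dl (T : dtheory Sg) B : permaconsistent T -> NE (DlD T B).
Proof.
  intros HP A. destruct (HP A (fun phi => worst phi true)) as [I HI].
  { intros; apply worst_repl. }
  exists I. unfold DlD, dset_val. apply tglb_T. intros v [phi [Hphi ->]].
  apply worst_ok; auto.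
Qed.

Lemma NE_Dc (T : dtheory Sg) B : permaconsistent T -> NE (DcD T B).
Proof.
  intros HP A. destruct (NE_Dl B HP A) as [I HI]. exists I. unfold DcD, DlD in *.
  rewrite HI; discriminate.
Qed.

Lemma tneg_of p : tneg (of_prop p) = of_prop (~ p).
Proof. unfold of_prop; destruct (excluded_middle_informative p), (excluded_middle_informative (~p)); tauto. Qed.
Lemma tmeet_of p q : tmeet (of_prop p) (of_prop q) = of_prop (p /\ q).
Proof.
  unfold of_prop; destruct (excluded_middle_informative p), (excluded_middle_informative q),
  (excluded_middle_informative (p /\ q)); tauto.
Qed.
Lemma tglb_of {X : Type} (F : X -> Prop) :
  tglb (fun v => exists x, v = of_prop (F x)) = of_prop (forall x, F x).
Proof.
  destruct (classic (forall x, F x)) as [H|H].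
  - rewrite (proj2 (of_prop_T _) H). apply tglb_T. intros v [x ->]. apply of_prop_T; auto.
  - rewrite (proj2 (of_prop_F _) H). apply tglb_F. apply not_all_ex_not in H.
    destruct H as [x Hx]. exists x. symmetry; apply of_prop_F; auto.
Qed.

Lemma dval_exact (Q : DPWS Sg) I phi : forall a, dval (Q, Q) I a phi = of_prop (dsat Q I a phi).
Proof.
  revert I. induction phi as [r ts|t1 t2|phi IHphi|phi1 IHphi1 phi2 IHphi2|phi IHphi|t phi IHphi];
    intros I a; simpl; auto.
  - rewrite IHphi, tneg_of; auto.
  - rewrite IHphi1, IHphi2, tmeet_of; auto.
  - rewrite <- tglb_of. apply tglb_ext. intros v; split; intros [d ->]; exists d; auto.
  - destruct (excluded_middle_informative _) as [H|H].
    + destruct (classic (forall J, Q (exist _ _ H) J -> dsat Q J a phi)) as [C|C].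
      * rewrite (proj2 (of_prop_T _)); [|exists H; auto].
        destruct (excluded_middle_informative _) as [h|h]; auto.
        exfalso; apply h; intros J HJ; simpl in HJ; rewrite IHphi; apply of_prop_T; auto.
      * rewrite (proj2 (of_prop_F _)).
        2:{ intros [H' HH]. apply C. intros J HJ. apply HH.
            rewrite (proof_irrelevance _ H' H); auto. }
        destruct (excluded_middle_informative _) as [h|h].
        { exfalso; apply C; intros J HJ. specialize (h J HJ). rewrite IHphi in h; apply of_prop_T; auto. }
        destruct (excluded_middle_informative _) as [h2|h2]; auto.
        exfalso; apply h2. apply not_all_ex_not in C; destruct C as [J C].
        apply imply_to_and in C. exists J; split; [tauto|]. rewrite IHphi; apply of_prop_F; tauto.
    + symmetry; apply of_prop_F. intros [H' _]; auto.
Qed.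

Lemma aval_exact (P : PWS' Sg) J phi : forall a, aval (P, P) J a phi = of_prop (asat P J a phi).
Proof.
  revert J. induction phi as [r ts|t1 t2|phi IHphi|phi1 IHphi1 phi2 IHphi2|phi IHphi|phi IHphi];
    intros J a; simpl; auto.
  - rewrite IHphi, tneg_of; auto.
  - rewrite IHphi1, IHphi2, tmeet_of; auto.
  - rewrite <- tglb_of. apply tglb_ext. intros v; split; intros [d ->]; exists d; auto.
  - destruct (classic (forall J', P J' -> asat P J' a phi)) as [C|C].
    + rewrite (proj2 (of_prop_T _)); auto.
      destruct (excluded_middle_informative _) as [h|h]; auto.
      exfalso; apply h; intros J' HJ; rewrite IHphi; apply of_prop_T; auto.
    + rewrite (proj2 (of_prop_F _)); auto.
      destruct (excluded_middle_informative _) as [h|h].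
      { exfalso; apply C; intros J' HJ. specialize (h J' HJ). rewrite IHphi in h; apply of_prop_T; auto. }
      destruct (excluded_middle_informative _) as [h2|h2]; auto.
      exfalso; apply h2. apply not_all_ex_not in C; destruct C as [J' C].
      apply imply_to_and in C. exists J'; split; [tauto|]. rewrite IHphi; apply of_prop_F; tauto.
Qed.

Lemma DopD_eq (T : dtheory Sg) Q : DopD T Q = DlD T (Q, Q).
Proof.
  extensionality A; extensionality I; apply propositional_extensionality.
  unfold DopD, DlD, dset_sat, dset_val. rewrite tglb_T. split.
  - intros H v [phi [Hp ->]]. rewrite dval_exact; apply of_prop_T; auto.
  - intros H phi Hp. apply of_prop_T. rewrite <- dval_exact. apply H; eauto.
Qed.

Lemma DopA_eq (T : atheory Sg) P : DopA T P = snd (DstarA T (P, P)).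
Proof.
  extensionality J; apply propositional_extensionality.
  unfold DopA, DstarA, aset_sat, aset_val; simpl. rewrite tglb_T. split.
  - intros H v [phi [Hp ->]]. rewrite aval_exact; apply of_prop_T; auto.
  - intros H phi Hp. apply of_prop_T. rewrite <- aval_exact. apply H; eauto.
Qed.

Lemma aval_tau (P0 S0 : PWS' Sg) (A : Agent Sg) (phi : dform Sg) J :
  aval (P0, S0) J (a0 Sg) (tau_formula (agent_term A) phi) = dval (pi P0, pi S0) (slice J A) (a0 Sg) phi.
Proof.
  apply main_tr. simpl. destruct (proj2_sig J) as [H1 _].
  destruct A as [x Hx]; simpl. rewrite H1.
  - apply s_agentC_int; auto.
  - unfold arF'; rewrite s_agentC_obj, s_agentC_ar; auto.
  - apply s_agentC_obj; auto.
Qed.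

Lemma Dc_op (T : dtheory Sg) P0 S0 :
  fst (DstarA (tau_theory T) (P0, S0)) = tau_pws (DcD T (pi P0, pi S0)).
Proof.
  extensionality J; apply propositional_extensionality. rewrite tau_char.
  unfold DstarA, DcD, aset_val, dset_val; simpl. rewrite tglb_F. split.
  - intros H A HA. rewrite tglb_F in HA. destruct HA as [phi [Hp Hv]].
    apply H. exists (tau_formula (agent_term A) phi). split; [exists A, phi; auto|].
    rewrite aval_tau; auto.
  - intros H [psi [[A [phi [Hp ->]]] Hv]]. apply (H A). rewrite tglb_F.
    exists phi; split; auto. rewrite <- aval_tau; auto.
Qed.

Lemma Dl_op (T : dtheory Sg) P0 S0 :
  snd (DstarA (tau_theory T) (P0, S0)) = tau_pws (DlD T (pi P0, pi S0)).
Proof.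
  extensionality J; apply propositional_extensionality. rewrite tau_char.
  unfold DstarA, DlD, aset_val, dset_val; simpl. rewrite tglb_T. split.
  - intros H A. apply tglb_T. intros v [phi [Hp ->]].
    rewrite <- aval_tau. apply H. exists (tau_formula (agent_term A) phi). split; auto.
    exists A, phi; auto.
  - intros H v [psi [[A [phi [Hp ->]]] ->]]. specialize (H A). rewrite tglb_T in H.
    rewrite aval_tau. apply H; eauto.
Qed.

End W.
Section A.
Variable Sg : Setup.

Lemma choose_fam (Q : DPWS Sg) : NE Q -> exists f : Agent Sg -> structure Sg, forall A, Q A (f A).
Proof.
  intros H. exists (fun A => proj1_sig (constructive_indefinite_description _ (H A))).
  intros A; exact (proj2_sig (constructive_indefinite_description _ (H A))).
Qed.

Lemma T1 (Q : DPWS Sg) : NE Q -> pi (tau_pws Q) = Q.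
Proof.
  intros HQ. extensionality A; extensionality I; apply propositional_extensionality. split.
  - intros [J [HJ <-]]. rewrite tau_char in HJ; auto.
  - intros HI. destruct (choose_fam HQ) as [f Hf].
    set (fam := fun B => if excluded_middle_informative (B = A) then I else f B).
    exists (tau_s fam). split.
    + apply tau_char. intros B. rewrite slice_tau. unfold fam.
      destruct (excluded_middle_informative (B = A)) as [->|]; auto.
    + rewrite slice_tau. unfold fam. destruct (excluded_middle_informative (A = A)); tauto.
Qed.

Lemma T2 (Q : DPWS Sg) : NE Q -> exists J, tau_pws Q J.
Proof.
  intros HQ. destruct (choose_fam HQ) as [f Hf]. exists (tau_s f).
  apply tau_char; intros A; rewrite slice_tau; auto.
Qed.

Lemma T4 (Q1 Q2 : DPWS Sg) : NE Q1 -> NE Q2 -> tau_pws Q1 = tau_pws Q2 -> Q1 = Q2.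
Proof. intros H1 H2 E. rewrite <- (T1 H1), <- (T1 H2), E; auto. Qed.

Lemma T5 (Q1 Q2 : DPWS Sg) : leKD Q1 Q2 -> leK (tau_pws Q1) (tau_pws Q2).
Proof. intros H J HJ. rewrite tau_char in *. intros A; apply H; auto. Qed.

Lemma T6 (Q1 Q2 : DPWS Sg) : NE Q2 -> leK (tau_pws Q1) (tau_pws Q2) -> leKD Q1 Q2.
Proof.
  intros HN H A I HI. rewrite <- (T1 HN) in HI. destruct HI as [J [HJ <-]].
  apply H in HJ. rewrite tau_char in HJ; auto.
Qed.

Lemma pi_mono (P1 P2 : PWS' Sg) : leK P1 P2 -> leKD (pi P1) (pi P2).
Proof. intros H A I [J [HJ E]]; exists J; auto. Qed.

Lemma T7 (Q Q' : DPWS Sg) : tau_pws Q = tau_pws Q' -> NE Q' -> NE Q.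
Proof.
  intros E HN. destruct (T2 HN) as [J HJ]. rewrite <- E in HJ. rewrite tau_char in HJ.
  intros A; exists (slice J A); auto.
Qed.

Variable T : dtheory Sg.
Hypothesis HP : permaconsistent T.
Local Notation Dc' := (fun B => fst (DstarA (tau_theory T) B)).

Lemma DstarA_op P0 S0 : DstarA (tau_theory T) (P0, S0) =
  (tau_pws (DcD T (pi P0, pi S0)), tau_pws (DlD T (pi P0, pi S0))).
Proof. rewrite (surjective_pairing (DstarA _ _)), Dc_op, Dl_op; auto. Qed.

Lemma stable_corr (Q x : DPWS Sg) : NE Q ->
  (is_stable (@leKD Sg) (DcD T) Q x <-> is_stable (@leK _) Dc' (tau_pws Q) (tau_pws x)).
Proof.
  intros HQ. unfold is_stable. split.
  - intros [Hfix Hl].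
    assert (Hx : NE x) by (rewrite <- Hfix; apply NE_Dc; auto).
    split.
    + rewrite Dc_op, (T1 Hx), (T1 HQ), Hfix; auto.
    + intros y Hy. rewrite Dc_op, (T1 HQ) in Hy.
      set (C := DcD T (pi y, Q)) in *.
      assert (F : pi y = C) by (rewrite <- Hy; apply T1, NE_Dc; auto).
      assert (FC : DcD T (C, Q) = C) by (rewrite <- F at 1; reflexivity).
      rewrite <- Hy. apply T5. apply Hl. exact FC.
  - intros [Hfix Hl]. rewrite Dc_op, (T1 HQ) in Hfix.
    assert (Hx : NE x) by (apply (T7 (eq_sym Hfix)); apply NE_Dc; auto).
    rewrite (T1 Hx) in Hfix. split.
    + apply T4; auto. apply NE_Dc; auto.
    + intros y Hy. assert (Hyn : NE y) by (rewrite <- Hy; apply NE_Dc; auto).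
      apply T6; auto. apply Hl. rewrite Dc_op, (T1 Hyn), (T1 HQ), Hy; auto.
Qed.

Lemma PSt_corr (B : DBP Sg) : dconsistent B -> (dPSt T B <-> aPSt (tau_theory T) (tau_bp B)).
Proof.
  destruct B as [Bc Bl]. intros Hc. unfold dPSt, aPSt, is_pst_model, tau_bp; cbn [fst snd]. split.
  - intros [_ [H1 H2]].
    assert (N1 : NE Bc) by (rewrite <- (proj1 H1); apply NE_Dc; auto).
    assert (N2 : NE Bl) by (rewrite <- (proj1 H2); apply NE_Dc; auto).
    split; [apply T5; auto|]. split; apply stable_corr; auto.
  - intros [_ [H1 H2]].
    assert (N1 : NE Bc).
    { destruct H1 as [F _]. cbv beta in F. rewrite Dc_op in F. apply (T7 (eq_sym F)); apply NE_Dc; auto. }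
    assert (N2 : NE Bl).
    { destruct H2 as [F _]. cbv beta in F. rewrite Dc_op in F. apply (T7 (eq_sym F)); apply NE_Dc; auto. }
    split; auto. split; [apply (stable_corr Bc N2)|apply (stable_corr Bl N1)]; auto.
Qed.

Lemma pst_NE (B : DBP Sg) : dPSt T B -> NE (fst B) /\ NE (snd B).
Proof.
  intros [_ [H1 H2]]. split.
  - rewrite <- (proj1 H1); apply NE_Dc; auto.
  - rewrite <- (proj1 H2); apply NE_Dc; auto.
Qed.

Lemma Sup_corr (Q : DPWS Sg) : dSup T Q <-> aSup (tau_theory T) (tau_pws Q).
Proof.
  unfold dSup, aSup, is_sup_model. rewrite DopD_eq, DopA_eq, Dl_op. split.
  - intros H. assert (N : NE Q) by (rewrite <- H; apply NE_Dl; auto).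
    rewrite (T1 N), H; auto.
  - intros H. assert (N : NE Q) by (apply (T7 (eq_sym H)); apply NE_Dl; auto).
    rewrite (T1 N) in H. apply T4; auto. apply NE_Dl; auto.
Qed.

Lemma St_corr (Q : DPWS Sg) : dSt T Q <-> aSt (tau_theory T) (tau_pws Q).
Proof.
  apply (@PSt_corr (Q, Q)). intros A I; auto.
Qed.

Lemma KK_corr (B : DBP Sg) : dconsistent B -> (dKK T B <-> aKK (tau_theory T) (tau_bp B)).
Proof.
  destruct B as [Bc Bl]. intros Hc. unfold dKK, aKK, is_kk_model, tau_bp, lep, consistentP; simpl. split.
  - intros [_ [Hf Hl]]. unfold DstarD in Hf. injection Hf as E1 E2.
    assert (N1 : NE Bc) by (rewrite <- E1; apply NE_Dc; auto).
    assert (N2 : NE Bl) by (rewrite <- E2; apply NE_Dl; auto).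
    split; [apply T5; auto|]. split.
    + rewrite DstarA_op, (T1 N1), (T1 N2), E1, E2; auto.
    + intros [P1 P2] Hc' Hf'. simpl in *. rewrite DstarA_op in Hf'. injection Hf' as F1 F2.
      assert (G1 : pi P1 = DcD T (pi P1, pi P2)).
      { rewrite <- F1 at 1. apply T1, NE_Dc; auto. }
      assert (G2 : pi P2 = DlD T (pi P1, pi P2)).
      { rewrite <- F2 at 1. apply T1, NE_Dl; auto. }
      destruct (Hl (pi P1, pi P2)) as [L1 L2]; simpl.
      * apply pi_mono; auto.
      * unfold DstarD. f_equal; symmetry; auto.
      * assert (H1 : tau_pws (pi P1) = P1) by (rewrite G1; exact F1).
        assert (H2 : tau_pws (pi P2) = P2) by (rewrite G2; exact F2).
        rewrite <- H1, <- H2. split; apply T5; auto.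
  - intros [_ [Hf Hl]]. rewrite DstarA_op in Hf. injection Hf as E1 E2.
    assert (N1 : NE Bc) by (apply (T7 (eq_sym E1)); apply NE_Dc; auto).
    assert (N2 : NE Bl) by (apply (T7 (eq_sym E2)); apply NE_Dl; auto).
    rewrite (T1 N1), (T1 N2) in E1, E2.
    split; auto. split.
    + unfold DstarD. f_equal; apply T4; auto; [apply NE_Dc|apply NE_Dl]; auto.
    + intros [B1 B2] Hc' Hf'. simpl in *. unfold DstarD in Hf'. injection Hf' as F1 F2.
      assert (M1 : NE B1) by (rewrite <- F1; apply NE_Dc; auto).
      assert (M2 : NE B2) by (rewrite <- F2; apply NE_Dl; auto).
      destruct (Hl (tau_pws B1, tau_pws B2)) as [L1 L2]; simpl.
      * apply T5; auto.
      * rewrite DstarA_op, (T1 M1), (T1 M2), F1, F2; auto.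
      * split; apply T6; auto.
Qed.

Lemma WF_corr (B : DBP Sg) : dconsistent B -> (dWF T B <-> aWF (tau_theory T) (tau_bp B)).
Proof.
  intros Hc. unfold dWF, aWF, is_wf_model. split.
  - intros [Hp Hl]. split; [apply PSt_corr; auto|].
    intros [P1 P2] Hp'.
    assert (Hp'' := Hp'). destruct Hp'' as [Hc' [[F1 _] [F2 _]]]. cbv beta in F1, F2.
    rewrite Dc_op in F1, F2. cbn [fst snd] in F1, F2.
    assert (G1 : tau_pws (pi P1) = P1).
    { rewrite <- F1 at 2. f_equal. rewrite <- F1 at 1. apply T1, NE_Dc; auto. }
    assert (G2 : tau_pws (pi P2) = P2).
    { rewrite <- F2 at 2. f_equal. rewrite <- F2 at 1. apply T1, NE_Dc; auto. }
    assert (Hq : dPSt T (pi P1, pi P2)).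
    { apply PSt_corr. { apply pi_mono; auto. } unfold tau_bp; simpl. rewrite G1, G2; auto. }
    destruct (Hl _ Hq) as [L1 L2]. simpl in *. split; simpl.
    + rewrite <- G1. apply T5; auto.
    + rewrite <- G2. apply T5; auto.
  - intros [Hp' Hl']. assert (Hp : dPSt T B) by (apply PSt_corr; auto). split; auto.
    intros B' HB'. destruct (pst_NE Hp) as [N1 N2]. destruct (pst_NE HB') as [M1 M2].
    assert (Hc' : dconsistent B') by (destruct HB'; auto).
    destruct (Hl' _ (proj1 (PSt_corr Hc') HB')) as [L1 L2].
    split; apply T6; auto.
Qed.

End A.

Theorem mainTheorem2 (Sg : Setup) (T : dtheory Sg) :
  dtheory_wf T ->
  permaconsistent T ->
  (forall Q : DPWS Sg, dSup T Q <-> aSup (tau_theory T) (tau_pws Q)) /\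
  (forall B : DBP Sg, dconsistent B ->
      (dKK T B <-> aKK (tau_theory T) (tau_bp B))) /\
  (forall B : DBP Sg, dconsistent B ->
      (dPSt T B <-> aPSt (tau_theory T) (tau_bp B))) /\
  (forall Q : DPWS Sg, dSt T Q <-> aSt (tau_theory T) (tau_pws Q)) /\
  (forall B : DBP Sg, dconsistent B ->
      (dWF T B <-> aWF (tau_theory T) (tau_bp B))).
Proof.
  intros _ HP. split; [|split; [|split; [|split]]].
  - apply Sup_corr; auto.
  - intros; apply KK_corr; auto.
  - intros; apply PSt_corr; auto.
  - apply St_corr; auto.
  - intros; apply WF_corr; auto.
Qed.
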